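(* Let $0<q<1$ and let ${\cal H}_n(z|q)=\sum_{k=0}^n\frac{(q;q)_n\,q^{-k/2}z^k}{(q;q)_k(q;q)_{n-k}}$ be the Rogers–Szegő polynomials, with orthonormal versions $\phi_n(z)=\frac{q^{n/2}}{\sqrt{(q;q)_n}}{\cal H}_n(z|q)$ (orthonormal on the unit circle with respect to $w(z)=\frac{(q^{1/2}z,q^{1/2}/z;q)_\infty}{2\pi(q;q)_\infty}$). Then $(D_q\phi_n)(z)=\frac{\sqrt{1-q^n}}{1-q}\phi_{n-1}(z)$ for $n\ge1$, and the $q$-discriminants are $$D(\phi_n,q)=\frac{(-q)^{n(n-1)/2}}{(1-q)^n}(q;q)_n\prod_{j=1}^{n-1}\frac{1}{(q;q)_j},\qquad D({\cal H}_n,q)=(-q)^{-n(n-1)/2}\Big[\frac{(q;q)_n}{1-q}\Big]^n\prod_{j=1}^{n-1}\frac{1}{(q;q)_j}.$$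
   Context: $(a;q)_0=1$, $(a;q)_n=\prod_{k=1}^n(1-aq^{k-1})$ for $n\ge1$ or $n=\infty$, and $(a,b;q)_n=(a;q)_n(b;q)_n$. $(D_qf)(z)=\frac{f(z)-f(qz)}{z-qz}$. For $f(z)=\gamma\prod_{j=1}^n(z-z_j)$, the $q$-discriminant is $D(f,q)=\gamma^{2n-2}q^{n(n-1)/2}\prod_{1\le j<k\le n}(q^{1/2}z_j-q^{-1/2}z_k)(q^{-1/2}z_j-q^{1/2}z_k)$. *)

(* Defs.v *)
From HB Require Import structures.
From mathcomp Require Import all_boot all_order all_algebra.
From mathcomp Require Import complex.
Set Implicit Arguments. Unset Strict Implicit. Unset Printing Implicit Defensive.
Import Order.TTheory GRing.Theory Num.Theory.
Local Open Scope ring_scope.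
Local Open Scope complex_scope.

Definition qpoch (R : rcfType) (a q : R) (n : nat) : R :=
  \prod_(i < n) (1 - a * q ^+ i).

Definition rogers_szego (R : rcfType) (n : nat) (q : R) : {poly R[i]} :=
  \sum_(k < n.+1)
    ((qpoch q q n / (qpoch q q k * qpoch q q (n - k)) * (Num.sqrt q) ^- k)%:C
       *: 'X^k).

Definition rs_phi (R : rcfType) (n : nat) (q : R) : {poly R[i]} :=
  ((Num.sqrt q ^+ n / Num.sqrt (qpoch q q n))%:C) *: rogers_szego n q.

Definition qderiv (R : rcfType) (q : R) (f : {poly R[i]}) (z : R[i]) : R[i] :=
  (f.[z] - f.[q%:C * z]) / (z - q%:C * z).

(* q-discriminant given the leading coefficient g and the list of roots zs (with
   multiplicity) of f = g * prod_j (z - z_j):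
   g^(2n-2) q^(n(n-1)/2) prod_{j<k} (q^(1/2) z_j - q^(-1/2) z_k)(q^(-1/2) z_j - q^(1/2) z_k) *)
Definition qdisc_roots (R : rcfType) (g : R[i]) (zs : seq R[i]) (q : R) : R[i] :=
  let n := size zs in
  let s := (Num.sqrt q)%:C in
  g ^ ((2 * n)%:Z - 2) * (q ^+ (n * (n - 1))./2)%:C *
  \prod_(j < n) \prod_(k < n | (j < k)%N)
     ((s * zs`_j - s^-1 * zs`_k) * (s^-1 * zs`_j - s * zs`_k)).

Definition qdisc (R : rcfType) (f : {poly R[i]}) (q : R) : R[i] :=
  qdisc_roots (lead_coef f) (sval (closed_field_poly_normal f)) q.

(* Main.v *)
Require Import Defs.
From HB Require Import structures.
From mathcomp Require Import all_boot all_order all_algebra.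
From mathcomp Require Import complex.
From mathcomp Require Import ring lra zify.
Import Order.TTheory GRing.Theory Num.Theory.
Local Open Scope ring_scope.
Local Open Scope complex_scope.

Section G.
Variable F : fieldType.
Implicit Types (f g : {poly F}) (r t : seq F) (a b c : F).

Lemma prod_cst r c : \prod_(z <- r) c = c ^+ size r.
Proof. by elim: r => [|w r IH]; rewrite ?big_nil ?big_cons ?IH ?exprS. Qed.

Lemma prod_cM r c (G : F -> F) : \prod_(z <- r) (c * G z) = c ^+ size r * \prod_(z <- r) G z.
Proof. by rewrite big_split prod_cst. Qed.

Lemma horner_nf f r a x : f = a *: \prod_(z <- r) ('X - z%:P) ->
  f.[x] = a * \prod_(z <- r) (x - z).
Proof.
move->; rewrite hornerZ horner_prod; congr (_ * _).
by apply: eq_bigr => z _; rewrite hornerXsubC.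
Qed.

Lemma size_nf f r a : a != 0 -> f = a *: \prod_(z <- r) ('X - z%:P) ->
  size f = (size r).+1.
Proof. by move=> ha ->; rewrite size_scale // size_prod_XsubC. Qed.

Lemma root_nf f r a z : f = a *: \prod_(w <- r) ('X - w%:P) -> z \in r -> f.[z] = 0.
Proof.
move=> /horner_nf -> hz; rewrite (big_rem z hz) /= subrr mul0r mulr0 //.
Qed.

Lemma sym_res f g r t a b :
  f = a *: \prod_(z <- r) ('X - z%:P) -> g = b *: \prod_(w <- t) ('X - w%:P) ->
  a ^+ size t * \prod_(z <- r) g.[z]
  = (-1) ^+ (size r * size t) * b ^+ size r * \prod_(w <- t) f.[w].
Proof.
move=> hf hg.
rewrite (eq_bigr _ (fun z _ => horner_nf _ _ _ z hg)) (eq_bigr _ (fun z _ => horner_nf _ _ _ z hf)).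
rewrite !prod_cM exchange_big /=.
have -> : \prod_(j <- t) \prod_(i <- r) (i - j)
        = \prod_(j <- t) ((-1) ^+ size r * \prod_(i <- r) (j - i)).
  by apply: eq_bigr => j _; rewrite -prod_cM; apply: eq_bigr => i _; rewrite mulN1r opprB.
rewrite prod_cM -exprM mulnC; ring.
Qed.

Lemma prod_nth r (G : F -> F) : \prod_(z <- r) G z = \prod_(j < size r) G r`_j.
Proof. by rewrite (big_nth 0) big_mkord. Qed.

Lemma count_pairs n c : \prod_(j < n) \prod_(k < n | (j < k)%N) c = c ^+ (n * (n - 1))./2.
Proof.
elim: n => [|n IH]; first by rewrite big_ord0.
rewrite big_ord_recl.
have -> : \prod_(k < n.+1 | (@ord0 n < k)%N) c = c ^+ n.
  rewrite big_mkcond big_ord_recl /= mul1r.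
  by rewrite (eq_bigr (fun _ => c)) // prodr_const card_ord.
have -> : \prod_(i < n) \prod_(k < n.+1 | (lift ord0 i < k)%N) c
        = \prod_(i < n) \prod_(k < n | (i < k)%N) c.
  apply: eq_bigr => i _; rewrite big_mkcond big_ord_recl /= mul1r.
  by rewrite [RHS]big_mkcond.
rewrite IH -exprD.
congr (_ ^+ _); rewrite !subn1 -!bin2 binS bin1 addnC //.
Qed.

Lemma pairs_split n c (G G' : 'I_n -> 'I_n -> F) :
  \prod_(j < n) \prod_(k < n | (j < k)%N) (c * (G j k * G' j k))
  = c ^+ (n * (n - 1))./2 * (\prod_(j < n) \prod_(k < n | (j < k)%N) G j k
        * \prod_(j < n) \prod_(k < n | (j < k)%N) G' j k).
Proof.
rewrite -count_pairs -!big_split; apply: eq_bigr => j _; by rewrite -!big_split.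
Qed.

Lemma exch_lt n (G : 'I_n -> 'I_n -> F) :
  \prod_(j < n) \prod_(k < n | (k < j)%N) G j k = \prod_(j < n) \prod_(k < n | (j < k)%N) G k j.
Proof.
transitivity (\prod_(j < n) \prod_(k < n) (if (k < j)%N then G j k else 1)).
  by apply: eq_bigr => j _; rewrite big_mkcond.
rewrite exchange_big; apply: eq_bigr => j _; by rewrite [RHS]big_mkcond.
Qed.

Lemma split_neq n (G : 'I_n -> F) (j : 'I_n) :
  \prod_(k < n) G k = G j * (\prod_(k < n | (j < k)%N) G k * \prod_(k < n | (k < j)%N) G k).
Proof.
rewrite (bigD1 j) //=; congr (_ * _).
rewrite (bigID (fun k : 'I_n => (j < k)%N)) /=; congr (_ * _); apply: eq_bigl => k.
  by rewrite andbC; case: ltnP => // h; rewrite -val_eqE /=; apply/eqP; lia.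
rewrite -val_eqE /=; case: (ltngtP j k) => h /=; lia.
Qed.
End G.
Section S.
Variable R : rcfType.
Variable q : R.
Hypothesis hq0 : 0 < q.
Hypothesis hq1 : q < 1.
Local Notation P := (qpoch q q).
Local Notation s := (Num.sqrt q).

Lemma P0 : P 0 = 1. Proof. by rewrite /qpoch big_ord0. Qed.
Lemma PS n : P n.+1 = P n * (1 - q ^+ n.+1).
Proof. by rewrite /qpoch big_ord_recr /= exprS. Qed.
Lemma qlt1 n : (0 < n)%N -> q ^+ n < 1.
Proof. by move=> hn; rewrite exprn_ilt1 ?ltW // -lt0n. Qed.
Lemma omq_gt0 n : (0 < n)%N -> 0 < 1 - q ^+ n.
Proof. by move=> /qlt1 h; rewrite subr_gt0. Qed.
Lemma P_gt0 n : 0 < P n.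
Proof. elim: n => [|n IH]; first by rewrite P0. by rewrite PS mulr_gt0 // omq_gt0. Qed.
Lemma P_neq0 n : P n != 0. Proof. by rewrite gt_eqF // P_gt0. Qed.
Lemma omq_neq0 n : (0 < n)%N -> 1 - q ^+ n != 0. Proof. by move=> h; rewrite gt_eqF // omq_gt0. Qed.
Lemma s_gt0 : 0 < s. Proof. by rewrite sqrtr_gt0. Qed.
Lemma s_neq0 : s != 0. Proof. by rewrite gt_eqF // s_gt0. Qed.
Lemma s2 : s ^+ 2 = q. Proof. by rewrite sqr_sqrtr // ltW. Qed.
Definition bq n k := P n / (P k * P (n - k)).
Definition aq n k := if (k <= n)%N then bq n k * s ^- k else 0.
Definition cc n := (1 - q ^+ n) / s.

Lemma bqnn n : bq n n = 1.
Proof. by rewrite /bq subnn P0 mulr1 divff // P_neq0. Qed.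
Lemma bqn0 n : bq n 0 = 1.
Proof. by rewrite /bq subn0 P0 mul1r divff // P_neq0. Qed.

Lemma bqK m k (hk : (k <= m)%N) :
  bq m.+1 k.+1 * (1 - q ^+ k.+1) = (1 - q ^+ m.+1) * bq m k.
Proof.
rewrite /bq subSS !PS.
have h1 := P_neq0 m; have h2 := P_neq0 k; have h3 := P_neq0 (m - k).
have h4 := omq_neq0 _ (ltn0Sn k).
field; by rewrite ?h1 ?h2 ?h3 ?h4 ?h5.
Qed.

Lemma bqPascal n k : (k < n)%N ->
  bq n.+1 k.+1 = bq n k + q ^+ k.+1 * bq n k.+1.
Proof.
move=> hk; rewrite /bq subSS.
have [m hm] : exists m, n = (k + m).+1 by exists (n - k.+1)%N; lia.
have e1 : (n - k = m.+1)%N by lia.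
have e2 : (n - k.+1 = m)%N by lia.
rewrite e1 e2 !PS.
have e3 : q ^+ n.+1 = q ^+ k.+1 * q ^+ m.+1 by rewrite -exprD hm; congr (_ ^+ _); lia.
rewrite e3.
have h1 := P_neq0 m; have h2 := P_neq0 k; have h3 := P_neq0 n.
have h4 := omq_neq0 _ (ltn0Sn k). have h5 := omq_neq0 _ (ltn0Sn m).
field; by rewrite ?h1 ?h2 ?h3 ?h4 ?h5.
Qed.

Lemma aq0 n : aq n 0 = 1.
Proof. by rewrite /aq leq0n bqn0 expr0 invr1 mulr1. Qed.

Lemma aqS n k : aq n.+1 k.+1 = s^-1 * aq n k + q ^+ k.+1 * aq n k.+1.
Proof.
rewrite /aq ltnS; case: (ltngtP k n) => hk.
- rewrite bqPascal // !(exprSr s); have hs := s_neq0; field; by rewrite hs expf_neq0.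
- by rewrite !mulr0 addr0.
- rewrite hk !bqnn mulr0 addr0 !(exprSr s); have hs := s_neq0; field; by rewrite hs expf_neq0.
Qed.

Lemma aqK m k : aq m.+1 k.+1 * (1 - q ^+ k.+1) = cc m.+1 * aq m k.
Proof.
rewrite /aq /cc ltnS; case: leqP => hk; last by rewrite mul0r mulr0.
rewrite exprSr invfM.
have h := bqK m k hk.
have hs := s_neq0. 
transitivity ((bq m.+1 k.+1 * (1 - q ^+ k.+1)) * s^-1 * s^-1 ^+ k); first by rewrite exprVn; ring.
rewrite h exprVn; ring.
Qed.
Local Open Scope complex_scope.
Local Notation C := R[i].
Local Notation H n := (rogers_szego n q).

Lemma cD (x y : R) : (x + y)%:C = x%:C + y%:C :> C. Proof. exact: rmorphD. Qed.
Lemma cB (x y : R) : (x - y)%:C = x%:C - y%:C :> C. Proof. exact: rmorphB. Qed.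
Lemma cN (x : R) : (- x)%:C = - x%:C :> C. Proof. exact: rmorphN. Qed.
Lemma cM (x y : R) : (x * y)%:C = x%:C * y%:C :> C. Proof. exact: rmorphM. Qed.
Lemma cX (x : R) n : (x ^+ n)%:C = x%:C ^+ n :> C. Proof. exact: rmorphXn. Qed.
Lemma cV (x : R) : (x^-1)%:C = (x%:C)^-1 :> C. Proof. exact: fmorphV. Qed.
Lemma c1 : (1 : R)%:C = 1 :> C. Proof. exact: rmorph1. Qed.
Lemma c0 : (0 : R)%:C = 0 :> C. Proof. exact: rmorph0. Qed.
Lemma cI (x y : R) : (x%:C = y%:C :> C) -> x = y. Proof. exact: complexI. Qed.

Lemma hornerH n (x : C) : (H n).[x] = \sum_(k < n.+1) (aq n k)%:C * x ^+ k.
Proof.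
rewrite /rogers_szego horner_sum; apply: eq_bigr => k _.
by rewrite hornerZ hornerXn /aq -ltnS ltn_ord.
Qed.

Lemma hornerH2 n (x : C) : (H n).[x] = \sum_(k < n.+2) (aq n k)%:C * x ^+ k.
Proof. by rewrite big_ord_recr /= {2}/aq ltnn rmorph0 mul0r addr0 hornerH. Qed.

Lemma H_rec n (z : C) :
  (H n.+1).[z] = (s^-1)%:C * z * (H n).[z] + (H n).[q%:C * z].
Proof.
rewrite hornerH (hornerH n) (hornerH2 n) big_ord_recl [X in _ = _ + X]big_ord_recl.
rewrite !aq0 mulr_sumr addrCA -big_split /=; congr (_ + _).
apply: eq_bigr => i _; rewrite /bump /= add1n aqS exprMn !(exprS z) !(cD, cM, cX); ring.
Qed.

Lemma H_K m (z : C) :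
  (H m.+1).[z] - (H m.+1).[q%:C * z] = (cc m.+1)%:C * z * (H m).[z].
Proof.
rewrite !hornerH -sumrB big_ord_recl /= !expr0 subrr add0r mulr_sumr.
apply: eq_bigr => i _.
have h := congr1 (real_complex R) (aqK m i).
rewrite !cM in h.
rewrite /bump /= add1n exprMn -(cX q).
transitivity ((aq m.+1 i.+1)%:C * (1 - q ^+ i.+1)%:C * z ^+ i.+1).
  rewrite cB c1; ring.
rewrite h (exprS z) /cc cM; ring.
Qed.

Lemma H_poly n : H n = \poly_(k < n.+1) (aq n k)%:C.
Proof.
apply/polyP => j; rewrite coef_poly /rogers_szego coef_sum.
case: ltnP => hj.
  rewrite (bigD1 (Ordinal hj)) //= big1 ?addr0.
    by rewrite coefZ coefXn eqxx mulr1 /aq -ltnS hj.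
  move=> k hk; rewrite coefZ coefXn.
  case: eqP => [e|_]; last by rewrite mulr0.
  by exfalso; move/eqP: hk; apply; apply: val_inj => /=; rewrite e.
rewrite big1 // => k _; rewrite coefZ coefXn.
case: eqP => [e|_]; last by rewrite mulr0.
by move: hj; rewrite e ltnNge -ltnS ltn_ord.
Qed.

Lemma aqnn_neq0 n : (aq n n)%:C != 0.
Proof.
rewrite /aq leqnn bqnn mul1r.
by rewrite (inj_eq (@complexI R)) invr_eq0 expf_neq0 // s_neq0.
Qed.

Lemma lead_H n : lead_coef (H n) = (s ^- n)%:C.
Proof.
rewrite H_poly lead_coef_poly //=; last exact: aqnn_neq0.
by rewrite /aq leqnn bqnn mul1r.
Qed.

Lemma size_H n : size (H n) = n.+1.
Proof. by rewrite H_poly size_poly_eq //; exact: aqnn_neq0. Qed.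

Lemma H_at0 n : (H n).[0] = 1.
Proof. by rewrite hornerH big_ord_recl /= expr0 aq0 mulr1 big1 ?addr0 // => i _; rewrite expr0n mulr0. Qed.


Lemma qdisc_key (f : {poly C}) r :
  f = lead_coef f *: \prod_(z <- r) ('X - z%:P) ->
  qdisc_roots (lead_coef f) r q * ((q%:C - 1) ^+ size r * \prod_(z <- r) z * lead_coef f ^+ size r)
  = lead_coef f ^ ((2 * size r)%:Z - 2) * (-1) ^+ ((size r * (size r - 1))./2)
    * \prod_(z <- r) f.[q%:C * z].
Proof.
move=> hf; rewrite /qdisc_roots /=.
set g := lead_coef f; set n := size r; set N := ((n * (n - 1))./2)%N.
set S := (Num.sqrt q)%:C.
have hS : S * S = q%:C by rewrite -cM -expr2 s2.
have hS0 : S != 0 by rewrite (inj_eq (@complexI R)) s_neq0.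
have hF : forall j k : 'I_n, (S * r`_j - S^-1 * r`_k) * (S^-1 * r`_j - S * r`_k)
   = - (q%:C)^-1 * ((q%:C * r`_j - r`_k) * (q%:C * r`_k - r`_j)).
  by move=> j k; rewrite -hS; field.
under eq_bigr => j _ do under eq_bigr => k _ do rewrite hF.
rewrite pairs_split -/N.
have hx : forall x, f.[x] = g * \prod_(j < n) (x - r`_j).
  by move=> x; rewrite (horner_nf _ _ _ _ x hf) prod_nth.
rewrite (prod_nth _ r (fun z => f.[q%:C * z])) -/n.
have e : \prod_(j < n) f.[q%:C * r`_j] = \prod_(j < n) (g * ((q%:C * r`_j - r`_j)
   * (\prod_(k < n | (j < k)%N) (q%:C * r`_j - r`_k) * \prod_(k < n | (k < j)%N) (q%:C * r`_j - r`_k)))).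
  by apply: eq_bigr => j _; rewrite hx (split_neq _ _ (fun k => q%:C * r`_j - r`_k) j).
rewrite e.
rewrite big_split /= prodr_const card_ord big_split /= big_split /= exch_lt.
rewrite (prod_nth _ r (fun z => z)).
have -> : \prod_(j < n) (q%:C * r`_j - r`_j) = (q%:C - 1) ^+ n * \prod_(j < n) r`_j.
  rewrite -[n in _ ^+ n]card_ord -prodr_const -big_split /=.
  by apply: eq_bigr => j _; rewrite mulrBl mul1r.
have hq : (q ^+ N)%:C * (- (q%:C)^-1) ^+ N = (-1) ^+ N.
  rewrite cX -exprMn mulrN mulfV // (inj_eq (@complexI R)) gt_eqF //.
rewrite -hq -/n; ring.
Qed.

Definition U m := P m ^+ m * \prod_(j < m) (P j)^-1.
Lemma U0 : U 0 = 1. Proof. by rewrite /U big_ord0 expr0 mulr1. Qed.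
Lemma US m : U m.+1 = (1 - q ^+ m.+1) ^+ m.+1 * U m.
Proof.
rewrite /U big_ord_recr /= PS exprMn (exprS (P m)).
have := P_neq0 m => h. field. done.
Qed.

Lemma gam_neq0 n : (s ^- n)%:C != 0 :> C.
Proof. by rewrite (inj_eq (@complexI R)) invr_eq0 expf_neq0 // s_neq0. Qed.

Lemma size_roots {n r} : H n = (s ^- n)%:C *: \prod_(z <- r) ('X - z%:P) -> size r = n.
Proof. by move=> h; have := size_nf _ _ _ _ (gam_neq0 n) h; rewrite size_H => -[]. Qed.

Lemma prod_roots {n r} : H n = (s ^- n)%:C *: \prod_(z <- r) ('X - z%:P) ->
  (s ^- n)%:C * (-1) ^+ n * \prod_(z <- r) z = 1.
Proof.
move=> h; rewrite -[RHS](H_at0 n) (horner_nf _ _ _ _ _ h) -{2}(size_roots h) -mulrA -prod_cM.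
by congr (_ * _); apply: eq_bigr => z _; rewrite sub0r mulN1r.
Qed.

Lemma Lroots m r : H m.+1 = (s ^- m.+1)%:C *: \prod_(z <- r) ('X - z%:P) ->
  \prod_(z <- r) (H m.+1).[q%:C * z]
  = (- (cc m.+1)%:C) ^+ m.+1 * \prod_(z <- r) z * \prod_(z <- r) (H m).[z].
Proof.
move=> h.
rewrite (eq_big_seq (fun z => - (cc m.+1)%:C * (z * (H m).[z]))).
  by rewrite prod_cM big_split (size_roots h) mulrA.
move=> z hz /=; have := H_K m z; rewrite (root_nf _ _ _ _ _ h hz) => e.
by rewrite mulrA !mulNr -e sub0r opprK.
Qed.

Lemma Vlem m r : H m.+1 = (s ^- m.+1)%:C *: \prod_(z <- r) ('X - z%:P) ->
  \prod_(z <- r) (H m).[z] = (U m)%:C.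
Proof.
elim: m r => [|m IH] r' h'.
  rewrite U0 c1 big1 // => z _; by rewrite hornerH big_ord1 aq0 expr0 mulr1 c1.
have [r hr] := closed_field_poly_normal (H m.+1); rewrite lead_H in hr.
have hs := sym_res _ _ _ _ _ _ _ hr h'.
rewrite (size_roots hr) (size_roots h') in hs.
have e1 : \prod_(z <- r) (H m.+2).[z] = \prod_(z <- r) (H m.+1).[q%:C * z].
  apply: eq_big_seq => z hz; by rewrite H_rec (root_nf _ _ _ _ _ hr hz) mulr0 add0r.
rewrite e1 Lroots // IH // in hs.
have hz := prod_roots hr.
have hsign : (-1) ^+ (m.+1 * m.+2) = 1 :> C.
  by rewrite -signr_odd oddM /= andbN.
rewrite hsign mul1r in hs.
apply: (mulfI (expf_neq0 m.+1 (gam_neq0 m.+2))); rewrite -hs.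
have hc : (s ^- m.+1)%:C * (cc m.+1)%:C = (s ^- m.+2)%:C * (1 - q ^+ m.+1)%:C :> C.
  rewrite -!cM; congr (_%:C); rewrite /cc (exprS s m.+1); have := s_neq0 => ?; field.
  by rewrite expf_neq0.
rewrite US (cM ((1 - q ^+ m.+1) ^+ m.+1) (U m)) (cX (1 - q ^+ m.+1)) exprS exprNn.
transitivity (((s ^- m.+1)%:C * (cc m.+1)%:C) ^+ m.+1
   * ((s ^- m.+1)%:C * (-1) ^+ m.+1 * \prod_(z <- r) z) * (U m)%:C).
  rewrite exprMn; ring.
by rewrite hz hc exprMn; ring.
Qed.

Lemma Wlem m : \prod_(1 <= j < m.+1) (P j)^-1 = (\prod_(j < m) (P j)^-1) * (P m)^-1.
Proof.
have -> : \prod_(1 <= j < m.+1) (P j)^-1 = \prod_(0 <= j < m.+1) (P j)^-1.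
  by rewrite (big_ltn (m:=0)) // P0 invr1 mul1r.
by rewrite big_nat_recr //= big_mkord.
Qed.

Lemma qN m : q ^+ ((m.+1 * (m.+1 - 1))./2) = ((s ^- m.+1) ^+ m)^-1.
Proof.
rewrite -{1}s2 -exprM exprVn invrK -exprM subSS subn0.
congr (_ ^+ _); have := odd_double_half (m.+1 * m); rewrite oddM /= andNb add0n => e.
by rewrite -[RHS]e -mul2n mulnC.
Qed.

Lemma Id3 m :
  let n := m.+1 in let N := ((n * (n - 1))./2)%N in
  (- q) ^- N * (P n / (1 - q)) ^+ n * \prod_(1 <= j < n) (P j)^-1
    * (q - 1) ^+ n * (s ^- n) ^+ n
  = (s ^- n) ^+ (2 * m) * (-1) ^+ N * (- cc n) ^+ n * U m.
Proof.
move=> n N.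
rewrite /N /n Wlem /U PS (exprNn q) (qN m) -/n.
have -> : q - 1 = - (1 - q) by rewrite opprB.
rewrite (exprNn (1 - q)) (exprNn (cc n)) /cc (expr_div_n (1 - q ^+ n) s).
set y := s ^+ n. set sg := (-1) ^+ _. set a := P m. set b := 1 - q ^+ n.
set e := 1 - q. set w := \prod_(j < m) (P j)^-1.
rewrite mulnC exprM /n !expr_div_n !exprMn.
rewrite ?(exprS (y^-1)) ?(exprS (-1)) ?(exprS a) ?(exprS b) ?(exprS e).
set G := y^-1 ^+ m.
have ha : a != 0 by exact: P_neq0.
have hb : b != 0 by exact: omq_neq0.
have he : e != 0 by rewrite subr_eq0 eq_sym lt_eqF.
have hy : y != 0 by rewrite expf_neq0 // s_neq0.
have hG : G != 0 by rewrite expf_neq0 // invr_eq0.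
have hsg : sg * sg = 1 by rewrite -exprMn mulrNN mulr1 expr1n.
rewrite invf_div /sg invr_sign -/sg.
field.
by rewrite hy ha he expf_neq0.
Qed.
Lemma Id2 m :
  let n := m.+1 in let N := ((n * (n - 1))./2)%N in
  let k := s ^+ n / Num.sqrt (P n) in
  (- q) ^+ N / (1 - q) ^+ n * P n * \prod_(1 <= j < n) (P j)^-1
    * (q - 1) ^+ n * (k * s ^- n) ^+ n
  = (k * s ^- n) ^+ (2 * m) * (-1) ^+ N * k ^+ n * (- cc n) ^+ n * U m.
Proof.
move=> n N k.
have ht2 : Num.sqrt (P n) ^+ 2 = P n by rewrite sqr_sqrtr // ltW // P_gt0.
have ht : Num.sqrt (P n) != 0 by rewrite sqrtr_eq0 -ltNge P_gt0.
have hsn : s ^+ n != 0 by rewrite expf_neq0 // s_neq0.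
have hk : k * s ^- n = (Num.sqrt (P n))^-1 by rewrite /k mulrAC divff // mul1r.
rewrite hk /k.
set t := Num.sqrt (P n).
rewrite (exprM t^-1 2 m) exprVn ht2.
rewrite /N /n Wlem /U PS (exprNn q) (qN m) -/n.
have -> : q - 1 = - (1 - q) by rewrite opprB.
rewrite (exprNn (1 - q)) (exprNn (cc n)) /cc (expr_div_n (1 - q ^+ n) s).
set y := s ^+ n. set sg := (-1) ^+ _. set a := P m. set b := 1 - q ^+ n.
set e := 1 - q. set w := \prod_(j < m) (P j)^-1.
rewrite /n !expr_div_n ?exprMn.
rewrite ?(exprS (y^-1)) ?(exprS (-1)) ?(exprS a) ?(exprS b) ?(exprS e) ?(exprS y) ?(exprS t^-1).
have -> : y ^+ m = (y^-1 ^+ m)^-1 by rewrite exprVn invrK.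
rewrite ?exprVn.
rewrite (exprS t) [(a * b) ^+ m]exprMn.
have ha : a != 0 by exact: P_neq0.
have hb : b != 0 by exact: omq_neq0.
have he : e != 0 by rewrite subr_eq0 eq_sym lt_eqF.
have hy : y != 0 by rewrite expf_neq0 // s_neq0.
field.
by rewrite !expf_neq0 // ?hy ?ht ?ha ?he ?s_neq0.
Qed.
Lemma IdK m : s ^+ m.+1 / Num.sqrt (P m.+1) * cc m.+1
  = Num.sqrt (1 - q ^+ m.+1) * (s ^+ m / Num.sqrt (P m)).
Proof.
rewrite /cc PS sqrtrM ?ltW ?P_gt0 //.
set b := 1 - q ^+ m.+1. set u := Num.sqrt b. set p := Num.sqrt (P m).
have hb : b = u ^+ 2 by rewrite sqr_sqrtr // ltW // omq_gt0.
have hu : u != 0 by rewrite sqrtr_eq0 -ltNge omq_gt0.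
have hp : p != 0 by rewrite sqrtr_eq0 -ltNge P_gt0.
have hs := s_neq0.
rewrite hb exprS; field.
by rewrite hu hp hs.
Qed.
Lemma part1 n (z : C) : (0 < n)%N -> z != 0 ->
  qderiv q (rs_phi n q) z = ((Num.sqrt (1 - q ^+ n) / (1 - q))%:C) * (rs_phi n.-1 q).[z].
Proof.
case: n => // m _ hz /=.
rewrite /qderiv /rs_phi !hornerZ -mulrBr H_K.
have e : (s ^+ m.+1 / Num.sqrt (P m.+1))%:C * (cc m.+1)%:C
       = (Num.sqrt (1 - q ^+ m.+1))%:C * (s ^+ m / Num.sqrt (P m))%:C :> C.
  by rewrite -!cM IdK.
have hq : (1 - q)%:C != 0 :> C.
  by rewrite (inj_eq (@complexI R)) subr_eq0 eq_sym lt_eqF.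
have hq' : 1 - q%:C != 0 :> C by rewrite -c1 -cB.
have hp1 : (Num.sqrt (P m.+1))%:C != 0 :> C.
  by rewrite (inj_eq (@complexI R)) sqrtr_eq0 -ltNge P_gt0.
have hp0 : (Num.sqrt (P m))%:C != 0 :> C.
  by rewrite (inj_eq (@complexI R)) sqrtr_eq0 -ltNge P_gt0.
rewrite (_ : z - q%:C * z = (1 - q)%:C * z); last by rewrite cB c1; ring.
transitivity ((s ^+ m.+1 / Num.sqrt (P m.+1))%:C * (cc m.+1)%:C * (H m).[z] / (1 - q)%:C).
  by field; apply/and3P; split.
rewrite e (cM (Num.sqrt (1 - q ^+ m.+1))) cV; field.
by apply/andP; split.
Qed.
Lemma part3 n : qdisc (H n) q
  = (((- q) ^- (n * (n - 1))./2 * (P n / (1 - q)) ^+ n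
         * \prod_(1 <= j < n) (P j)^-1)%:C).
Proof.
rewrite /qdisc; case: (closed_field_poly_normal (H n)) => r hr0 /=.
have hr := hr0; rewrite lead_H in hr.
rewrite lead_H.
case: n r hr0 hr => [|m] r hr0 hr.
  have := size_roots hr; move/size0nil => ?; subst r.
  rewrite /qdisc_roots /= big_ord0 !expr0 invr1 !c1 big_geq //.
  by rewrite exp1rz !mulr1 c1.
have hk := qdisc_key _ _ hr0; rewrite lead_H (size_roots hr) (Lroots _ _ hr) (Vlem _ _ hr) in hk.
have hz := prod_roots hr.
have hK : (q%:C - 1) ^+ m.+1 * \prod_(z <- r) z * (s ^- m.+1)%:C ^+ m.+1 != 0.
  rewrite !mulf_neq0 ?expf_neq0 ?gam_neq0 //.
    by rewrite -c1 -cB (inj_eq (@complexI R)) subr_eq0 lt_eqF.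
  by apply/eqP => h0; move: hz; rewrite h0 mulr0 => /eqP; rewrite eq_sym oner_eq0.
apply: (mulIf hK); rewrite hk.
have -> : ((2 * m.+1)%N%:Z - 2 = (2 * m)%N :> int).
  by rewrite mulnS PoszD addrAC subrr add0r.
rewrite -exprnP.
have E := Id3 m; simpl in E.
transitivity (((s ^- m.+1) ^+ (2 * m) * (-1) ^+ (m.+1 * (m.+1 - 1))./2 * (- cc m.+1) ^+ m.+1 * U m)%:C
   * \prod_(z <- r) z).
  set u := U m; set c := cc m.+1.
  by rewrite !(cM, cX, cN, cV, c1); ring.
rewrite -E.
by rewrite !(cM, cX, cN, cV, cB, c1); ring.
Qed.
Lemma part2 n : qdisc (rs_phi n q) q
  = (((- q) ^+ (n * (n - 1))./2 / (1 - q) ^+ n * P n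
         * \prod_(1 <= j < n) (P j)^-1)%:C).
Proof.
rewrite /qdisc; case: (closed_field_poly_normal (rs_phi n q)) => r hr0 /=.
set k := s ^+ n / Num.sqrt (P n).
have hkn : k%:C != 0 :> C.
  rewrite (inj_eq (@complexI R)) mulf_neq0 ?expf_neq0 ?s_neq0 // invr_eq0.
  by rewrite sqrtr_eq0 -ltNge P_gt0.
have hl : lead_coef (rs_phi n q) = (k * s ^- n)%:C by rewrite /rs_phi lead_coefZ lead_H -cM.
have hr : H n = (s ^- n)%:C *: \prod_(z <- r) ('X - z%:P).
  apply: (scalerI hkn); rewrite scalerA -cM -hl -hr0 //.
have hev : forall x, (rs_phi n q).[x] = k%:C * (H n).[x] by move=> x; rewrite /rs_phi hornerZ.
have hk := qdisc_key _ _ hr0; rewrite hl in hk; rewrite hl.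
case: n @k r hr0 hkn hl hr hev hk => [|m] k r hr0 hkn hl hr hev hk.
  have := size_roots hr; move/size0nil => ?; subst r.
  rewrite /qdisc_roots /= big_ord0 /k P0 sqrtr1 !expr0.
  by rewrite !divr1 !mulr1 !rmorph1 exp1rz big_geq // mulr1 rmorph1.
rewrite (size_roots hr) (eq_bigr _ (fun z _ => hev (q%:C * z))) prod_cM (size_roots hr)
  (Lroots _ _ hr) (Vlem _ _ hr) in hk.
have hz := prod_roots hr.
have hK : (q%:C - 1) ^+ m.+1 * \prod_(z <- r) z * (k * s ^- m.+1)%:C ^+ m.+1 != 0.
  rewrite !mulf_neq0 ?expf_neq0 ?gam_neq0 //.
      by rewrite -c1 -cB (inj_eq (@complexI R)) subr_eq0 lt_eqF.
    by apply/eqP => h0; move: hz; rewrite h0 mulr0 => /eqP; rewrite eq_sym oner_eq0.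
  by rewrite cM mulf_neq0 ?gam_neq0.
apply: (mulIf hK); rewrite hk.
have -> : ((2 * m.+1)%N%:Z - 2 = (2 * m)%N :> int).
  by rewrite mulnS PoszD addrAC subrr add0r.
rewrite -exprnP.
have E := Id2 m; simpl in E.
transitivity (((k * s ^- m.+1) ^+ (2 * m) * (-1) ^+ (m.+1 * (m.+1 - 1))./2 * k ^+ m.+1
   * (- cc m.+1) ^+ m.+1 * U m)%:C * \prod_(z <- r) z).
  set u := U m; set c := cc m.+1.
  by rewrite !(cM, cX, cN, cV, c1); ring.
rewrite -E.
by rewrite !(cM, cX, cN, cV, cB, c1); ring.
Qed.
End S.

Theorem mainTheorem10 (R : rcfType) (q : R) (hq0 : 0 < q) (hq1 : q < 1) :
  (forall (n : nat) (z : R[i]), (0 < n)%N -> z != 0 ->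
     qderiv q (rs_phi n q) z
     = ((Num.sqrt (1 - q ^+ n) / (1 - q))%:C) * (rs_phi n.-1 q).[z])
  /\
  (forall n : nat,
     qdisc (rs_phi n q) q
     = (((- q) ^+ (n * (n - 1))./2 / (1 - q) ^+ n * qpoch q q n
         * \prod_(1 <= j < n) (qpoch q q j)^-1)%:C))
  /\
  (forall n : nat,
     qdisc (rogers_szego n q) q
     = (((- q) ^- (n * (n - 1))./2 * (qpoch q q n / (1 - q)) ^+ n
         * \prod_(1 <= j < n) (qpoch q q j)^-1)%:C)).
Proof.
split; first exact: (@part1 R q hq0 hq1).
split; [exact: (@part2 R q hq0 hq1) | exact: (@part3 R q hq0 hq1)].
Qed.
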